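(* Let $R$ be an associative ring with identity and $a,b,c,d\in R$ such that both $a^{\|(b,c)}$ and $d^{\|(b,c)}$ exist. Then the following are equivalent: (i) $a^{\|(b,c)}a=d^{\|(b,c)}d$; (ii) $d^{\|(b,c)}da^{\|(b,c)}a=a^{\|(b,c)}ad^{\|(b,c)}d$; (iii) $a^{\|(b,c)}dd^{\|(b,c)}a=d^{\|(b,c)}aa^{\|(b,c)}d$; (iv) $a^{\|(b,c)}d$ is group invertible and $(a^{\|(b,c)}d)^{\#}=d^{\|(b,c)}a$; (v) $d^{\|(b,c)}a$ is group invertible and $(d^{\|(b,c)}a)^{\#}=a^{\|(b,c)}d$.
   Context: For $a,b,c\in R$, $a$ is $(b,c)$-invertible if there exists $y\in R$ with $y\in (bRy)\cap(yRc)$, $yab=b$ and $cay=c$; such $y$ is unique and denoted $a^{\|(b,c)}$. An element $x\in R$ is group invertible if there is $z\in R$ with $xzx=x$, $zxz=z$, $xz=zx$; such $z$ is unique and denoted $x^{\#}$. *)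

(* Defs.v *)
From HB Require Import structures.
From mathcomp Require Import all_boot all_order all_algebra.
Set Implicit Arguments. Unset Strict Implicit. Unset Printing Implicit Defensive.
Import GRing.Theory.
Local Open Scope ring_scope.

Definition bc_inverse (R : pzRingType) (a b c y : R) : Prop :=
  (exists r : R, y = b * r * y) /\ (exists s : R, y = y * s * c) /\
  y * a * b = b /\ c * a * y = c.

Definition group_inverse (R : pzRingType) (x z : R) : Prop :=
  x * z * x = x /\ z * x * z = z /\ x * z = z * x.

(* Main.v *)
Require Import Defs.
From HB Require Import structures.
From mathcomp Require Import all_boot all_order all_algebra.
Local Open Scope ring_scope.
Import GRing.Theory.
Set Implicit Arguments. Unset Strict Implicit.

Lemma bcL (R : pzRingType) (a b c y : R) : bc_inverse a b c y ->
  forall u, y * (a * (b * u)) = b * u.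
Proof. by move=> [_ [_ [H _]]] u; rewrite !mulrA H. Qed.

Lemma bcR (R : pzRingType) (a b c y : R) : bc_inverse a b c y ->
  forall u, u * c * a * y = u * c.
Proof. by move=> [_ [_ [_ H]]] u; rewrite -!mulrA (mulrA c a y) H. Qed.

Lemma cross1 (R : pzRingType) (a d b c ya yd : R) :
  bc_inverse a b c ya -> bc_inverse d b c yd -> ya * a * yd = yd.
Proof.
move=> Ha Hd; case: (Hd) => [[r Hr] _].
by rewrite Hr -!mulrA (@bcL _ _ _ _ _ Ha).
Qed.

Lemma cross2 (R : pzRingType) (a d b c ya yd : R) :
  bc_inverse a b c ya -> bc_inverse d b c yd -> ya * d * yd = ya.
Proof.
move=> Ha Hd; case: (Ha) => [_ [[s Hs] _]].
by rewrite Hs (@bcR _ _ _ _ _ Hd).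
Qed.

Lemma ginv_uniq (R : pzRingType) (x z z' : R) :
  group_inverse x z -> group_inverse x z' -> z = z'.
Proof.
move=> [h1 [h2 h3]] [k1 [k2 k3]].
have E1 : x * z = x * z' * (x * z) by rewrite mulrA k1.
have E2 : x * z' = x * z * (x * z') by rewrite mulrA h1.
have E3 : x * z = x * z * (x * z').
  by rewrite h3 k3 -mulrA (mulrA x z' x) k1.
have E : x * z = x * z' by rewrite E3 -E2.
transitivity (z * x * z); first by rewrite h2.
rewrite -mulrA E mulrA -h3 E k3; exact: k2.
Qed.

Theorem theorem4p3 (R : pzRingType) (a b c d ya yd : R)
  (Hya : bc_inverse a b c ya) (Hyd : bc_inverse d b c yd) :
  [/\ (ya * a = yd * d <-> yd * d * ya * a = ya * a * yd * d),
      (ya * a = yd * d <-> ya * d * yd * a = yd * a * ya * d),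
      (ya * a = yd * d <->
         (exists z, group_inverse (ya * d) z) /\
         (forall z, group_inverse (ya * d) z -> z = yd * a)) &
      (ya * a = yd * d <->
         (exists z, group_inverse (yd * a) z) /\
         (forall z, group_inverse (yd * a) z -> z = ya * d))].
Proof.
have A1 := cross1 Hya Hyd. have A2 := cross1 Hyd Hya.
have B1 := cross2 Hya Hyd. have B2 := cross2 Hyd Hya.
have P1 : ya * a * ya = ya by have := cross1 Hya Hya.
have P2 : yd * d * yd = yd by have := cross1 Hyd Hyd.
have Q1 : yd * d * ya * a = ya * a by rewrite A2.
have Q2 : ya * a * yd * d = yd * d by rewrite A1.
have X1 : ya * d * (yd * a) = ya * a by rewrite mulrA B1.
have X2 : yd * a * (ya * d) = yd * d by rewrite mulrA B2.
have G1 : ya * a = yd * d <-> group_inverse (ya * d) (yd * a).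
  split.
  - move=> E; split; [|split].
    + by rewrite X1 mulrA P1.
    + by rewrite X2 mulrA P2.
    + by rewrite X1 X2.
  - by move=> [_ [_ E]]; rewrite -X1 -X2.
have G2 : ya * a = yd * d <-> group_inverse (yd * a) (ya * d).
  split.
  - move=> E; split; [|split].
    + by rewrite X2 mulrA P2.
    + by rewrite X1 mulrA P1.
    + by rewrite X1 X2 E.
  - by move=> [_ [_ E]]; rewrite -X1 -X2 E.
split.
- by rewrite Q1 Q2; split=> ->.
- by rewrite B1 B2; split.
- split.
  + move=> /G1 H; split; first by exists (yd * a).
    by move=> z Hz; apply: (ginv_uniq Hz H).
  + move=> [[z Hz] H]; apply G1; by have := H _ Hz => <-.
- split.
  + move=> /G2 H; split; first by exists (ya * d).
    by move=> z Hz; apply: (ginv_uniq Hz H).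
  + move=> [[z Hz] H]; apply G2; by have := H _ Hz => <-.
Qed.
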